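(* Let $\alpha\in(0,\tfrac12)$, $K>0$ and $\mu\in\widetilde{\mathcal C}_{\mathcal M}(0,T)$, and let $X(t;0,z,\Omega)$ be the (forward-unique) flow of $\frac{dX}{dt}=\mathcal V[\mu_t](X)$. Then there exists $L=L(\alpha,K,\mu)$ such that $$d\big(X(t;0,(z_1,\Omega_1)),X(t;0,(z_2,\Omega_2))\big)\le d((z_1,\Omega_1),(z_2,\Omega_2))\,e^{Lt}$$ for all $(z_1,\Omega_1),(z_2,\Omega_2)\in\mathbb T\times\mathbb R$ and $t\in[0,T]$.
   Context: $\mathbb T$ is the unit circle identified with $(-\pi,\pi]$ via $z=e^{i\theta}$; $|\theta|_o$ = absolute value of the representative of $\theta$ mod $2\pi$ in $(-\pi,\pi]$; $d((e^{i\theta_1},\Omega_1),(e^{i\theta_2},\Omega_2))=(|\theta_1-\theta_2|_o^2+(\Omega_1-\Omega_2)^2)^{1/2}$. Kernel $h(\theta)=\sin\theta/|\theta|_o^{2\alpha}$ ($\theta\notin2\pi\mathbb Z$), $h=0$ on $2\pi\mathbb Z$. $\mathcal P[\mu](\theta,\Omega)=\Omega-K\int h(\theta-\theta')\,d\mu(\theta',\Omega')$, $\mathcal V[\mu](z,\Omega)=(\mathcal P[\mu](z,\Omega)\,iz,0)$. $\widetilde{\mathcal C}_{\mathcal M}(0,T)$: $\mu\in L^\infty(0,T;\mathcal M(\mathbb T\times\mathbb R))$ with $t\mapsto\int\varphi\,d\mu_t$ continuous for all bounded continuous $\varphi$. For such $\mu$, the characteristic system $\frac{dX}{dt}=\mathcal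 V[\mu_t](X)$, $X(0)=x$, has a global $C^1$ solution that is unique forward in time; $X(t;0,x)$ denotes it. *)

(* Defs.v *)
From HB Require Import structures.
From mathcomp Require Import all_boot all_order all_algebra.
From mathcomp Require Import all_classical all_reals all_analysis.
Set Implicit Arguments. Unset Strict Implicit. Unset Printing Implicit Defensive.
Import Order.TTheory GRing.Theory Num.Theory.
Import numFieldNormedType.Exports.
Local Open Scope classical_set_scope.
Local Open Scope ring_scope.

Section Kuramoto.
Variable R : realType.

(* representative of x mod 2pi in (-pi, pi] *)
Definition repO (x : R) : R :=
  x - 2 * pi * (Num.ceil ((x - pi) / (2 * pi)))%:~R.

Definition absO (x : R) : R := `|repO x|.

(* kernel h(theta) = sin theta / |theta|_o^(2 alpha), and 0 on 2 pi Z
   (note: absO x = 0 iff x \in 2 pi Z) *)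
Definition hker (alpha : R) (x : R) : R :=
  if absO x == 0 then 0 else sin x / powR (absO x) (2 * alpha).

(* distance on T x R, points represented by (lift angle, Omega) *)
Definition distTR (p q : R * R) : R :=
  Num.sqrt (absO (p.1 - q.1) ^+ 2 + (p.2 - q.2) ^+ 2).

(* measures on T x R are represented as measures on R x R (first
   coordinate = angle) concentrated on (-pi, pi] x R *)
Definition Pfield (alpha K : R) (m : {measure set (R * R)%type -> \bar R})
  (th om : R) : R :=
  om - K * fine (\int[m]_p (hker alpha (th - p.1))%:E).

Definition in_CM (T : R) (mu : R -> {measure set (R * R)%type -> \bar R}) : Prop :=
  (* concentrated on (-pi,pi] x R, i.e. a measure on T x R *)
  (forall t, t \in `[0, T] -> mu t (~` (`]- pi, pi] `*` setT)) = 0%E) /\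
  (* L^infty(0,T; M): uniformly bounded total mass *)
  (exists C : R, forall t, t \in `[0, T] -> (mu t setT <= C%:E)%E) /\
  (* weak continuity against bounded continuous functions on T x R
     (= continuous bounded functions on R x R, 2pi-periodic in the angle) *)
  (forall phi : R * R -> R,
     continuous phi ->
     (exists M : R, forall p, `|phi p| <= M) ->
     (forall p, phi (p.1 + 2 * pi, p.2) = phi p) ->
     {within `[0, T], continuous (fun t => fine (\int[mu t]_p (phi p)%:E))}).

(* (th, om) is a solution on [0,T] of dX/dt = V[mu_t](X), written with a
   continuous lift th of the angle: z(t) = e^{i th(t)}, Omega(t) = om t *)
Definition char_sol (alpha K T : R) (mu : R -> {measure set (R * R)%type -> \bar R})
  (th om : R -> R) : Prop :=
  {within `[0, T], continuous th} /\ {within `[0, T], continuous om} /\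
  (forall t, t \in `]0, T[ ->
     is_derive t 1 th (Pfield alpha K (mu t) (th t) (om t)) /\
     is_derive t 1 om 0).

End Kuramoto.

(* Main.v *)
Require Import Defs.
From HB Require Import structures.
From mathcomp Require Import all_boot all_order all_algebra.
From mathcomp Require Import all_classical all_reals all_analysis.
From mathcomp Require Import ring lra zify.
From mathcomp Require Import measurable_realfun.
Set Implicit Arguments. Unset Strict Implicit. Unset Printing Implicit Defensive.
Import Order.TTheory GRing.Theory Num.Theory.
Import numFieldNormedType.Exports.
Local Open Scope classical_set_scope.
Local Open Scope ring_scope.

Section S.
Variable R : realType.

Lemma sin_le_id (x : R) : 0 <= x -> sin x <= x.
Proof.
move=> x0.
have D : forall y, y \in `]0, x[ -> is_derive y 1 (fun y => y - sin y) (1 - cos y).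
  by move=> y _; apply: is_deriveB.
have C : {within `[0, x], continuous (fun y : R => y - sin y)}.
  apply: continuous_subspaceT => y; apply: continuousB; [exact: cvg_id | exact: continuous_sin].
have [c _ E] := MVT_segment x0 D C.
move: E; rewrite sin0 !subr0 => E.
by rewrite -subr_ge0 E mulr_ge0 // subr_ge0 cos_le1.
Qed.

Lemma abs_sin_le (x : R) : `|sin x| <= `|x|.
Proof.
wlog x0 : x / 0 <= x.
  move=> H; have [/H//|x0] := leP 0 x.
  by rewrite -normrN -sinN -(normrN x) H // oppr_ge0 ltW.
rewrite (ger0_norm x0) ler_norml sin_le_id // andbT.
have [x1|x1] := leP 1 x.
  by rewrite (le_trans _ (sin_geN1 x)) // lerN2.
have xpi : x <= pi by have := @pi_ge2 R; lra.
have := @sin_ge0_pi R x; rewrite x0 xpi => /(_ isT); lra.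
Qed.

Lemma cos_ge_sq (x : R) : 1 - x ^+ 2 / 2 <= cos x.
Proof.
have -> : x = (x / 2) *+ 2 by rewrite -mulr_natr mulfVK.
rewrite cos_mulr2n cos2sin2.
have := abs_sin_le (x / 2); rewrite -(ler_sqr (normr_ge0 _) (normr_ge0 _)) !real_normK ?num_real //.
move=> h. rewrite -mulr_natr.
have -> : (x / 2 * 2%:R) ^+ 2 / 2 = (x / 2) ^+ 2 *+ 2 by rewrite -mulr_natr; field.
lra.
Qed.

Lemma pi_lt4 : pi < 4 :> R.
Proof. have := @pihalf_lt2 R; lra. Qed.

Variable alpha : R.
Hypothesis a0 : 0 < alpha.
Hypothesis a1 : alpha < 1 / 2.

Definition pp := - (2 * alpha).
Definition h0 (y : R) : R := sin y * powR `|y| pp.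

Lemma h0N y : h0 (- y) = - h0 y.
Proof. by rewrite /h0 sinN normrN mulNr. Qed.

Lemma h0_ge0 y : 0 <= y <= pi -> 0 <= h0 y.
Proof. by move=> hy; rewrite /h0 mulr_ge0 ?powR_ge0 ?sin_ge0_pi. Qed.

Lemma powR_pp_le1 a : 1 <= a -> powR a pp <= 1.
Proof.
move=> a1'; rewrite -(powRr0 a); apply: ler_powR => //.
by rewrite /pp oppr_le0 mulr_ge0 // ltW.
Qed.

Lemma powR_pp_mul a : 0 < a -> a * powR a pp = powR a (1 - 2 * alpha).
Proof.
move=> ap; rewrite powRD ?powRr1 ?ltW //.
by apply/implyP => _; rewrite gt_eqF.
Qed.

Lemma powR_1pp_le1 a : 0 < a <= 1 -> powR a (1 - 2 * alpha) <= 1.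
Proof.
move=> ha; rewrite -[leRHS](powRr0 a); apply: ger_powR => //.
have := a0; have := a1; lra.
Qed.

Lemma h0_bound y : `|h0 y| <= 1.
Proof.
rewrite /h0 normrM (ger0_norm (powR_ge0 _ _)).
have [y1|y1] := leP 1 `|y|.
  by rewrite -(mulr1 1) ler_pM ?powR_ge0 ?sin_max ?powR_pp_le1.
have [->|y0] := eqVneq y 0; first by rewrite sin0 normr0 mul0r.
have ya : 0 < `|y| by rewrite normr_gt0.
apply: (le_trans (ler_wpM2r (powR_ge0 _ _) (abs_sin_le y))).
by rewrite powR_pp_mul // powR_1pp_le1 // ya ltW.
Qed.

Definition f0 : R -> R := ((@sin R) * (fun x : R => powR x pp))%R.

Lemma f0E (y : R) : 0 <= y -> f0 y = h0 y.
Proof. by move=> y0; rewrite /f0 /h0 ger0_norm. Qed.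

Lemma f0_derive (x : R) : 0 < x ->
  is_derive x 1 f0 (sin x * (pp * powR x (pp - 1)) + powR x pp * cos x).
Proof.
move=> x0; rewrite /f0; apply: is_derive_eq.
  apply: is_deriveM; exact: is_derive1_powR.
by rewrite /GRing.scale /= mulrC.
Qed.

Lemma df0_ge (x : R) : 0 < x <= pi ->
  - 8 <= sin x * (pp * powR x (pp - 1)) + powR x pp * cos x.
Proof.
case/andP=> x0 xpi.
have e1 : powR x (pp - 1) = powR x pp / x.
  by rewrite powRB ?powRr1 ?ltW //; apply/implyP => _; rewrite gt_eqF.
rewrite e1.
have s0 : 0 <= sin x by rewrite sin_ge0_pi // ltW // x0.
have sx : sin x <= x by rewrite sin_le_id // ltW.
have cx := cos_ge_sq x.
have P0 : 0 < powR x pp by rewrite powR_gt0.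
set P := powR x pp in P0 *.
have sq : sin x * (P / x) <= P.
  rewrite mulrA ler_pdivrMr // [P * x]mulrC ler_wpM2r //; exact: ltW.
have key : sin x * (pp * (P / x)) >= - (2 * alpha) * P.
  have -> : sin x * (pp * (P / x)) = pp * (sin x * (P / x)) by ring.
  rewrite /pp; have := a0; nra.
have bnd : P * x ^+ 2 <= 16.
  have [x1|x1] := leP 1 x.
    have : P <= 1 by rewrite powR_pp_le1.
    have := pi_lt4; have := a0; have := a1; nra.
  have : x * P <= 1 by rewrite powR_pp_mul // powR_1pp_le1 // x0 ltW.
  have := a0; have := a1; nra.
have := a0; have := a1; nra.
Qed.

Lemma h0_lip (y z : R) : 0 <= y -> y <= z -> z <= pi -> - 8 * (z - y) <= h0 z - h0 y.
Proof.
move=> y0 yz zpi.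
have [->|yp] := eqVneq y 0.
  have -> : h0 0 = 0 by rewrite /h0 sin0 mul0r.
  have := h0_ge0 (y := z); rewrite zpi andbT => /(_ (le_trans y0 yz)) hz.
  rewrite !subr0; lra.
have ypos : 0 < y by rewrite lt_neqAle eq_sym yp.
have D : forall x, x \in `]y, z[ -> is_derive x 1 f0 (sin x * (pp * powR x (pp - 1)) + powR x pp * cos x).
  move=> x; rewrite in_itv /= => /andP[yx _]; apply: f0_derive; exact: lt_trans yx.
have C : {within `[y, z], continuous f0}.
  apply: derivable_within_continuous => x; rewrite in_itv /= => /andP[yx _].
  by case: (f0_derive (lt_le_trans ypos yx)).
have [c] := MVT_segment yz D C.
rewrite in_itv /= => /andP[yc cz] E.
rewrite -!f0E ?(le_trans y0 yz) // E.
have := @df0_ge c; rewrite (le_trans cz) // andbT (lt_le_trans ypos yc) => /(_ isT) hc.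
have : 0 <= z - y by rewrite subr_ge0.
nra.
Qed.

Lemma h0_lipB (y z : R) : - pi <= y -> y <= z -> z <= pi -> - 8 * (z - y) <= h0 z - h0 y.
Proof.
move=> yl yz zl.
have [y0|y0] := leP 0 y; first exact: h0_lip.
have [z0|z0] := leP z 0.
  have := @h0_lip (- z) (- y); rewrite !h0N.
  have -> : - y - - z = z - y by ring.
  move=> H; have := H; rewrite oppr_ge0 lerN2 lerNl z0 yz yl => /(_ isT isT isT); lra.
have h1 := @h0_ge0 z; rewrite zl (ltW z0) in h1.
have h2 := @h0_ge0 (- y); rewrite h0N in h2.
have : 0 <= - y <= pi by rewrite oppr_ge0 (ltW y0) lerNl.
move=> /h2 {}h2; have := h1 isT.
lra.
Qed.
End S.

Section S2.
Variable R : realType.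

Lemma twopi_gt0 : 0 < 2 * pi :> R.
Proof. by rewrite mulr_gt0 // pi_gt0. Qed.

Lemma repOE (x : R) : repO x = x - 2 * pi * (Num.ceil ((x - pi) / (2 * pi)))%:~R.
Proof. by []. Qed.

Lemma repO_itv (x : R) : - pi < repO x <= pi.
Proof.
rewrite repOE.
have := real_ceil_itv (num_real ((x - pi) / (2 * pi))).
set c := Num.ceil _ => /andP[h1 h2].
have p0 := @twopi_gt0.
move: h1 h2; rewrite ltr_pdivlMr // ler_pdivrMr // rmorphB /= => h1 h2.
apply/andP; split; nra.
Qed.

Lemma sin_periodZ (x : R) (n : int) : sin (x + 2 * pi * n%:~R) = sin x.
Proof.
have P m (y : R) : sin (y + 2 * pi * (Posz m)%:~R) = sin y.
  rewrite -[2 * pi * _]/(2 * pi * m%:R) -(periodicn (@sinD2pi R) m y); congr sin.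
  by rewrite -mulr_natr mulr2n; ring.
case: n => m; first exact: P.
rewrite NegzE rmorphN /= mulrN.
by rewrite -[in RHS](subrK (2 * pi * (m.+1)%:R) x) -[(m.+1)%:R]/((Posz m.+1)%:~R) P.
Qed.

Lemma int_small (m : int) : -1 < (m%:~R : R) < 1 -> m = 0.
Proof.
have -> : (-1 : R) = (-1 : int)%:~R by rewrite rmorphN rmorph1.
rewrite -[(1 : R)]/((1 : int)%:~R) !ltr_int => /andP[h1 h2]; lia.
Qed.

Lemma repO_uniq (x y : R) (n : int) : - pi < y <= pi -> y = x - 2 * pi * n%:~R -> repO x = y.
Proof.
move=> hy E; rewrite E in hy *.
have := repO_itv x; rewrite repOE.
set c := Num.ceil _ => hc.
have p0 := twopi_gt0.
suff : n - c = 0 by move/eqP; rewrite subr_eq0 => /eqP ->.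
apply: int_small; rewrite rmorphB /=.
move: hy hc.
generalize (n%:~R : R) (c%:~R : R) => N C; rewrite -/(2 * pi) => /andP[h1 h1'] /andP[h2 h2'].
move: h1 h1' h2 h2'; set u := 2 * pi * N; set v := 2 * pi * C => h1 h1' h2 h2'.
have e : 2 * pi * (N - C) = u - v by rewrite /u /v; ring.
clearbody u v.
have e1 : 2 * pi * (N - C) < 2 * pi * 1 by rewrite e; lra.
have e2 : 2 * pi * (-1) < 2 * pi * (N - C) by rewrite e; lra.
by rewrite !ltr_pM2l // in e1 e2; rewrite e1 e2.
Qed.

Lemma repO_shift (x : R) (k : int) : repO (x + 2 * pi * k%:~R) = repO x.
Proof.
have := repO_itv x; rewrite repOE; set c := Num.ceil _ => hc.
rewrite -repOE.
apply: (@repO_uniq _ _ (c + k)); first exact: repO_itv.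
rewrite repOE -/c rmorphD /=; ring.
Qed.

Lemma sin_repO (x : R) : sin (repO x) = sin x.
Proof.
by rewrite repOE -mulrN -rmorphN /= sin_periodZ.
Qed.

Variable alpha : R.
Hypothesis a0 : 0 < alpha.
Hypothesis a1 : alpha < 1 / 2.

Lemma hkerE (x : R) : hker alpha x = h0 alpha (repO x).
Proof.
rewrite /hker /h0 /absO sin_repO.
case: eqP => [->|nz]; last by rewrite /pp powRN.
have a2 : 2 * alpha != 0 by rewrite mulf_neq0 // gt_eqF.
by rewrite powR0 ?mulr0 // /pp oppr_eq0.
Qed.

Lemma hker_shift (x : R) (k : int) : hker alpha (x + 2 * pi * k%:~R) = hker alpha x.
Proof. by rewrite !hkerE repO_shift. Qed.

Lemma hker_bound (x : R) : `|hker alpha x| <= 1.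
Proof. rewrite hkerE; apply: h0_bound => //. Qed.

End S2.

Section S3.
Variable R : realType.
Variable alpha : R.
Hypothesis a0 : 0 < alpha.
Hypothesis a1 : alpha < 1 / 2.

Lemma repO_int (x : R) : exists n : int, repO x = x - 2 * pi * n%:~R.
Proof. by exists (Num.ceil ((x - pi) / (2 * pi))); exact: repOE. Qed.

Lemma int01 (m : int) : -1 < (m%:~R : R) < 2 -> m = 0 \/ m = 1.
Proof.
have -> : (-1 : R) = (-1 : int)%:~R by rewrite rmorphN rmorph1.
rewrite -[(2 : R)]/((2 : int)%:~R) !ltr_int => /andP[h1 h2]; lia.
Qed.

Lemma h0_wrap (y : R) (r : R) : 0 <= r < 1 -> 1 <= `|y| -> `|sin y| <= r -> `|h0 alpha y| <= r.
Proof.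
move=> /andP[r0 r1] y1 sy.
rewrite /h0 normrM (ger0_norm (powR_ge0 _ _)).
apply: le_trans sy; rewrite -[leRHS]mulr1 ler_wpM2l //.
exact: powR_pp_le1.
Qed.

Lemma aux_bound (p b r N1 N2 : R) : 2 <= p -> 0 <= r -> r < 1 ->
  - p < b - 2 * p * N1 -> b - 2 * p * N1 <= p ->
  - p < b + r - 2 * p * N2 -> b + r - 2 * p * N2 <= p -> -1 < N2 - N1 < 2.
Proof.
move=> p2 r0 r1; set u := 2 * p * N1; set v := 2 * p * N2 => h1 h1' h2 h2'.
have e : 2 * p * (N2 - N1) = v - u by rewrite /u /v; ring.
clearbody u v.
have p0 : 0 < 2 * p by lra.
have f1 : 2 * p * (N2 - N1) < 2 * p * 2 by rewrite e; lra.
have f2 : 2 * p * (-1) < 2 * p * (N2 - N1) by rewrite e; lra.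
by rewrite !ltr_pM2l // in f1 f2; rewrite f1 f2.
Qed.

Lemma KLpos (b r : R) : 0 <= r -> - 8 * r <= hker alpha (b + r) - hker alpha b.
Proof.
move=> r0.
have hb1 := hker_bound a0 a1 (b + r); have hb2 := hker_bound a0 a1 b.
have [r1|r1] := leP 1 r.
  move: hb1 hb2; rewrite !ler_norml => /andP[? ?] /andP[? ?]; lra.
have [n1 e1] := repO_int b; have [n2 e2] := repO_int (b + r).
have i1 := repO_itv b; have i2 := repO_itv (b + r).
rewrite !hkerE //.
have p0 := @twopi_gt0 R.
have pi2 := @pi_ge2 R.
have [m0|m1] : n2 - n1 = 0 \/ n2 - n1 = 1.
  apply: int01; rewrite rmorphB /=.
  move: i1 i2; rewrite e1 e2 => /andP[h1 h1'] /andP[h2 h2'].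
  exact: (aux_bound pi2 r0 r1 h1 h1' h2 h2').
- have ez : repO (b + r) = repO b + r.
    rewrite e1 e2; move/eqP: m0; rewrite subr_eq0 => /eqP ->; ring.
  rewrite ez.
  move: i1 i2; rewrite ez => /andP[h1 h1'] /andP[h2 h2'].
  have := @h0_lipB R alpha a0 a1 (repO b) (repO b + r).
  have -> : repO b + r - repO b = r by ring.
  apply; lra.
- have ez : repO (b + r) = repO b + r - 2 * pi.
    rewrite e1 e2; move/eqP: m1; rewrite subr_eq addrC => /eqP ->.
    rewrite rmorphD /=; ring.
  move: i1 i2; rewrite ez => /andP[h1 h1'] /andP[h2 h2'].
  set y := repO b in h1 h1' h2 h2' *.
  have A : `|h0 alpha y| <= r.
    apply: h0_wrap; first by rewrite r0 r1.
      by rewrite ger0_norm; lra.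
    have -> : sin y = sin (pi - y) by rewrite sinB sinpi cospi; ring.
    rewrite (le_trans (abs_sin_le _)) // ger0_norm; lra.
  have B : `|h0 alpha (y + r - 2 * pi)| <= r.
    apply: h0_wrap; first by rewrite r0 r1.
      by rewrite ler0_norm; lra.
    have -> : sin (y + r - 2 * pi) = - sin (y + r - 2 * pi + pi) by rewrite sinDpi opprK.
    rewrite normrN (le_trans (abs_sin_le _)) // ger0_norm; lra.
  move: A B; rewrite !ler_norml => /andP[? ?] /andP[? ?]; lra.
Qed.

Lemma KL (b r : R) : - 8 * r ^+ 2 <= r * (hker alpha (b + r) - hker alpha b).
Proof.
have [r0|r0] := leP 0 r.
  have := KLpos b r0; nra.
have := @KLpos (b + r) (- r); rewrite oppr_ge0 (ltW r0) => /(_ isT).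
rewrite -addrA subrr addr0 => h; nra.
Qed.

End S3.

Section S4.
Variable R : realType.

Lemma bdd_integrable d (T : measurableType d) (m : {measure set T -> \bar R}) (C0 M : R) (f : T -> R) :
  (m setT <= C0%:E)%E -> measurable_fun setT f -> 0 <= M -> (forall x, `|f x| <= M) ->
  m.-integrable setT (EFin \o f).
Proof.
move=> mC mf M0 fM; apply/integrableP; split; first exact/measurable_EFinP.
apply: (le_lt_trans (@integral_le_bound _ _ _ m setT (EFin \o f) M%:E _ _ _ _)) => //.
- exact/measurable_EFinP.
- by apply: aeW => x _ /=; rewrite lee_fin.
apply: (@le_lt_trans _ _ (M%:E * C0%:E)%E); first by rewrite lee_wpmul2l // lee_fin.
by rewrite -EFinM ltry.
Qed.

Lemma Rint_diff d (T : measurableType d) (m : {measure set T -> \bar R}) (C0 : R) (f g : T -> R) (r c : R) :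
  (m setT <= C0%:E)%E -> measurable_fun setT f -> measurable_fun setT g ->
  (forall x, `|f x| <= 1) -> (forall x, `|g x| <= 1) -> 0 <= c ->
  (forall p, - c <= r * (f p - g p)) ->
  - c * Num.max C0 0 <= r * (Rintegral m setT f - Rintegral m setT g).
Proof.
move=> mC mf mg fb gb c0 H.
have If := bdd_integrable mC mf ler01 fb.
have Ig := bdd_integrable mC mg ler01 gb.
have mfg : measurable_fun setT (fun p => f p - g p) by exact: measurable_funB.
have Ifg : m.-integrable setT (EFin \o (fun p => f p - g p)).
  apply: (bdd_integrable (M := 2) mC mfg) => // x.
  rewrite (le_trans (ler_normB _ _)) //.
  by have := fb x; have := gb x; lra.
have Ir : m.-integrable setT (EFin \o (fun p => r * (f p - g p))).
  apply: (bdd_integrable (M := `|r| * 2) mC) => //.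
  - exact: measurable_funM.
  - move=> x; rewrite normrM ler_wpM2l //.
    rewrite (le_trans (ler_normB _ _)) //.
    by have := fb x; have := gb x; lra.
have Ic : m.-integrable setT (EFin \o (fun _ : T => - c)).
  by apply: (bdd_integrable (M := `|c|) mC) => // x; rewrite normrN.
rewrite -RintegralB // -RintegralZl //.
have fin : (m setT \is a fin_num)%E.
  rewrite ge0_fin_numE ?measure_ge0 //; exact: (le_lt_trans mC (ltry _)).
have le1 : fine (m setT) <= Num.max C0 0.
  rewrite le_max; apply/orP; left.
  by rewrite -lee_fin fineK.
apply: (@le_trans _ _ (- c * fine (m setT))).
  by rewrite !mulNr lerN2 ler_wpM2l.
rewrite -Rintegral_cst //.
apply: le_Rintegral => //.
Qed.

Variable alpha : R.
Hypothesis a0 : 0 < alpha.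
Hypothesis a1 : alpha < 1 / 2.

Lemma ceil_meas : measurable_fun setT (fun x : R => ((Num.ceil ((x - pi) / (2 * pi)))%:~R : R)).
Proof.
apply: nondecreasing_measurable => // x y xy.
rewrite ler_int; apply: le_ceil.
by rewrite ler_pM2r ?invr_gt0 ?twopi_gt0 // lerB.
Qed.

Lemma repO_meas : measurable_fun setT (@repO R).
Proof.
have -> : @repO R = (fun x => x - 2 * pi * ((Num.ceil ((x - pi) / (2 * pi)))%:~R : R)).
  by apply/funext => x; exact: repOE.
apply: measurable_funB => //; apply: measurable_funM => //; exact: ceil_meas.
Qed.

Lemma hker_meas : measurable_fun setT (hker alpha).
Proof.
have -> : hker alpha = (fun x => sin x * powR `|repO x| (pp alpha)).
  by apply/funext => x; rewrite hkerE // /h0 sin_repO.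
apply: measurable_funM.
  exact: continuous_measurable_fun (@continuous_sin R).
have H := measurableT_comp (measurable_powR (pp alpha)) (measurableT_comp (@normr_measurable R setT) repO_meas).
exact: H.
Qed.

Lemma hker_comp_meas (th : R) : measurable_fun setT (fun p : R * R => hker alpha (th - p.1)).
Proof.
apply: measurableT_comp; first exact: hker_meas.
apply: measurable_funB => //; exact: measurable_fst.
Qed.

End S4.

Section S5.
Variable R : realType.

Lemma gronwall (th1 th2 om1 om2 d1 d2 : R -> R) (T c L : R) :
  {within `[0, T], continuous th1} -> {within `[0, T], continuous th2} ->
  {within `[0, T], continuous om1} -> {within `[0, T], continuous om2} ->
  (forall s, s \in `]0, T[ -> is_derive s 1 th1 (d1 s) /\ is_derive s 1 om1 0) ->
  (forall s, s \in `]0, T[ -> is_derive s 1 th2 (d2 s) /\ is_derive s 1 om2 0) ->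
  (forall s, s \in `]0, T[ -> 2 * (th1 s - th2 s - c) * (d1 s - d2 s) <=
      L * ((th1 s - th2 s - c) ^+ 2 + (om1 s - om2 s) ^+ 2)) ->
  forall t, t \in `[0, T] ->
    (th1 t - th2 t - c) ^+ 2 + (om1 t - om2 t) ^+ 2 <=
    ((th1 0 - th2 0 - c) ^+ 2 + (om1 0 - om2 0) ^+ 2) * expR (L * t).
Proof.
move=> c1 c2 c3 c4 D1 D2 Hd t.
rewrite in_itv /= => /andP[t0 tT].
pose U := th1 - th2 - cst c.
pose W := om1 - om2.
pose E := expR \o ((- L) \*: (@id R)).
pose G := (U * U + W * W) * E.
have GE s : G s = ((th1 s - th2 s - c) ^+ 2 + (om1 s - om2 s) ^+ 2) * expR (- L * s).
  by rewrite /G /U /W /E /= !expr2.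
have dG s : s \in `]0, T[ ->
    is_derive s 1 G (expR (- L * s) * (2 * (th1 s - th2 s - c) * (d1 s - d2 s)
       - L * ((th1 s - th2 s - c) ^+ 2 + (om1 s - om2 s) ^+ 2))).
  move=> hs; have [h1 o1] := D1 s hs; have [h2 o2] := D2 s hs.
  have dU : is_derive s 1 U (d1 s - d2 s - 0).
    by apply: is_deriveB => //; apply: is_deriveB.
  have dW : is_derive s 1 W (0 - 0) by apply: is_deriveB.
  have dE : is_derive s 1 E (expR (- L * s) * (- L *: 1)).
    apply: is_derive1_comp; apply: is_deriveZ.
  have := is_deriveM (is_deriveD (is_deriveM dU dU) (is_deriveM dW dW)) dE.
  move=> H; apply: (is_derive_eq H).
  have e1 : (U * U + W * W) s = (th1 s - th2 s - c) ^+ 2 + (om1 s - om2 s) ^+ 2.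
    by rewrite /U /W !expr2.
  have e2 : E s = expR (- L * s) by [].
  have e3 : U s = th1 s - th2 s - c by [].
  have e4 : (- L)%:A = - L :> R by rewrite /GRing.scale /= mulr1.
  rewrite e1 e2 e3 e4 /GRing.scale /=; ring.
have CG : {within `[0, T], continuous G}.
  have CE : continuous E.
    move=> y; apply: continuous_comp; last exact: continuous_expR.
    by apply: continuousZr; exact: cvg_id.
  move=> x; rewrite /G; apply: cvgM; last exact: (continuous_subspaceT CE).
  have cU : U @ nbhs (x : subspace `[0, T]) --> U x.
    by rewrite /U; apply: cvgB; [apply: cvgB; [exact: c1|exact: c2]|exact: cvg_cst].
  have cW : W @ nbhs (x : subspace `[0, T]) --> W x.
    by rewrite /W; apply: cvgB; [exact: c3|exact: c4].
  by apply: cvgD; apply: cvgM.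
have key : G t <= G 0.
  have [->|tnz] := eqVneq t 0; first by [].
  have tpos : 0 < t by rewrite lt_neqAle eq_sym tnz.
  have sub : `[0, t] `<=` `[0, T].
    move=> x; rewrite /= !in_itv /= => /andP[-> xt] /=; exact: le_trans xt tT.
  have D : forall x, x \in `]0, t[ -> is_derive x 1 G (expR (- L * x) *
       (2 * (th1 x - th2 x - c) * (d1 x - d2 x) -
        L * ((th1 x - th2 x - c) ^+ 2 + (om1 x - om2 x) ^+ 2))).
    move=> x; rewrite !in_itv /= => /andP[x0 xt]; apply: dG.
    by rewrite in_itv /= x0 (lt_le_trans xt tT).
  have [x hx E1] := MVT tpos D (continuous_subspaceW sub CG).
  rewrite -subr_le0 E1 subr0; apply: mulr_le0_ge0; last exact: ltW.
  apply: mulr_ge0_le0; first exact: expR_ge0.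
  rewrite subr_le0; apply: Hd; move: hx; rewrite !in_itv /= => /andP[-> xt].
  exact: lt_le_trans xt tT.
move: key; rewrite !GE mulr0 expR0 mulr1 => key.
have Et : expR (- L * t) * expR (L * t) = 1 by rewrite -expRD mulNr addNr expR0.
have := expR_gt0 (L * t); have := expR_gt0 (- L * t).
set A := _ + _ in key *; set B := _ + _ in key *.
move=> e1 e2.
have := ler_wpM2r (ltW e2) key.
by rewrite -mulrA Et mulr1.
Qed.
End S5.

Section S6.
Variable R : realType.

Lemma int_cases (n : int) : (n%:~R : R) <= -1 \/ n = 0 \/ 1 <= (n%:~R : R).
Proof.
have -> : (-1 : R) = (-1 : int)%:~R by rewrite rmorphN rmorph1.
rewrite -[(1 : R)]/((1 : int)%:~R) !ler_int; lia.
Qed.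

Lemma sq_aux (y N p : R) : 2 <= p -> - p < y - 2 * p * N -> y - 2 * p * N <= p ->
  N <= -1 \/ 1 <= N -> (y - 2 * p * N) ^+ 2 <= y ^+ 2.
Proof.
move=> p2 h1 h2 [hn|hn].
- have hy : y <= - p by nra.
  set r := y - 2 * p * N in h1 h2 *; nra.
- have hy : p <= y by nra.
  set r := y - 2 * p * N in h1 h2 *; nra.
Qed.

Lemma repO_sq (y : R) : repO y ^+ 2 <= y ^+ 2.
Proof.
have [n e] := repO_int y.
have := repO_itv y; rewrite e => /andP[h1 h2].
have pi2 := @pi_ge2 R.
case: (int_cases n) => [hn|[->|hn]].
- exact: (sq_aux pi2 h1 h2 (or_introl hn)).
- by rewrite mulr0 subr0.
- exact: (sq_aux pi2 h1 h2 (or_intror hn)).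
Qed.

Lemma absO_sq (x : R) (k : int) : absO x ^+ 2 <= (x - 2 * pi * k%:~R) ^+ 2.
Proof.
rewrite /absO real_normK ?num_real //.
have -> : repO x = repO (x - 2 * pi * k%:~R).
  by rewrite -{1}(subrK (2 * pi * k%:~R) x) repO_shift.
exact: repO_sq.
Qed.

End S6.

Unset Implicit Arguments.
Set Strict Implicit.

Theorem mainTheorem15 (R : realType) (alpha K T : R)
  (mu : R -> {measure set (R * R)%type -> \bar R}) :
  0 < alpha -> alpha < 1 / 2 -> 0 < K -> in_CM T mu ->
  exists L : R,
    forall th1 om1 th2 om2 : R -> R,
      char_sol alpha K T mu th1 om1 -> char_sol alpha K T mu th2 om2 ->
      forall t, t \in `[0, T] ->
        distTR (th1 t, om1 t) (th2 t, om2 t)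
          <= distTR (th1 0, om1 0) (th2 0, om2 0) * expR (L * t).
Proof.
move=> a0 a1 K0 [_ [[C0 HC] _]].
set C1 := Num.max C0 0.
have C10 : 0 <= C1 by rewrite le_max lexx orbT.
set L := 1 + 16 * K * C1.
exists (L / 2).
move=> th1 om1 th2 om2 [c1 [c3 D1]] [c2 [c4 D2]] t ht.
have [k ek] := repO_int (th1 0 - th2 0).
pose c : R := 2 * pi * k%:~R.
have Hd : forall s, s \in `]0, T[ ->
    2 * (th1 s - th2 s - c) * (Pfield alpha K (mu s) (th1 s) (om1 s) - Pfield alpha K (mu s) (th2 s) (om2 s)) <=
      L * ((th1 s - th2 s - c) ^+ 2 + (om1 s - om2 s) ^+ 2).
  move=> s hs.
  have hs' : s \in `[0, T] by move: hs; rewrite !in_itv /= => /andP[? ?]; apply/andP; split; exact: ltW.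
  set U := th1 s - th2 s - c.
  have pw : forall p : R * R, - (8 * U ^+ 2) <= U * (hker alpha (th1 s - p.1) - hker alpha (th2 s - p.1)).
    move=> p.
    have -> : th1 s - p.1 = ((th2 s - p.1) + U) + 2 * pi * k%:~R by rewrite /U /c; ring.
    rewrite hker_shift // -mulNr; exact: KL.
  have key := @Rint_diff R _ _ (mu s) C0 (fun p => hker alpha (th1 s - p.1)) (fun p => hker alpha (th2 s - p.1))
     U (8 * U ^+ 2) (HC s hs') (hker_comp_meas a0 _) (hker_comp_meas a0 _)
     (fun p => hker_bound a0 a1 _) (fun p => hker_bound a0 a1 _) _ pw.
  move: key; rewrite /Pfield.
  set I1 := \int[mu s]_x _; set I2 := \int[mu s]_x _.
  move=> /(_ (mulr_ge0 (ler0n _ 8) (sqr_ge0 U))) key.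
  change (2 * U * (om1 s - K * I1 - (om2 s - K * I2)) <= L * (U ^+ 2 + (om1 s - om2 s) ^+ 2)).
  rewrite /L; clearbody I1 I2 U; rewrite -/C1 in key.
  set W := om1 s - om2 s.
  have -> : 2 * U * (om1 s - K * I1 - (om2 s - K * I2)) = 2 * U * W - 2 * K * (U * (I1 - I2)) by rewrite /W; ring.
  clearbody W.
  set X := U * (I1 - I2) in key *.
  have h1 : 2 * U * W <= U ^+ 2 + W ^+ 2.
    have := sqr_ge0 (U - W); rewrite sqrrB; lra.
  have h2 : - (2 * K * X) <= 16 * K * C1 * U ^+ 2.
    have : - (8 * U ^+ 2) * C1 * (2 * K) <= X * (2 * K) by rewrite ler_wpM2r // mulr_ge0 // ltW.
    lra.
  have h3 : 0 <= 16 * K * C1 * W ^+ 2 by rewrite mulr_ge0 // ?sqr_ge0 // mulr_ge0 // mulr_ge0 // ltW.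
  lra.
have G := @gronwall R th1 th2 om1 om2 _ _ T c L c1 c2 c3 c4 D1 D2 Hd t ht.
rewrite /distTR /=.
have A1 := absO_sq (th1 t - th2 t) k.
have A0 : absO (th1 0 - th2 0) ^+ 2 = (th1 0 - th2 0 - c) ^+ 2.
  by rewrite /absO real_normK ?num_real // ek.
rewrite A0.
have Ee : expR (L * t) = expR (L / 2 * t) ^+ 2.
  by rewrite expr2 -expRD; congr expR; field.
rewrite Ee in G.
set B := _ + (om1 0 - om2 0) ^+ 2 in G *.
have B0 : 0 <= B by rewrite addr_ge0 ?sqr_ge0.
rewrite -(ger0_norm (expR_ge0 (L / 2 * t))) -sqrtr_sqr -sqrtrM //.
apply: ler_wsqrtr.
apply: le_trans G; rewrite lerD2r //.
Qed.
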